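(* Let $P$ be the random walk on a connected weighted graph on finite vertex set $X$, let $M\subseteq X$ be nonempty, let $S\subseteq X\setminus M$ be nonempty, and let $p\in\mathbb R$ and $T\in\mathbb N$ satisfy $\frac{2}{T}\le\pi(S)\,p\le\frac{1}{C_{S,M}}$. Then, for the walk started from $Y_0\sim\pi|_S$, \[ \Pr_{\pi|_S}\big(\tau_M<\tau_S^+\ \text{and}\ \tau_S^+<T\big)\ge p/2, \] i.e., with probability at least $p/2$ the walk first hits $M$ and then returns to $S$ within the first $T$ steps.
   Context: Weighted graph $w_{u,v}=w_{v,u}\ge0$, $w_u=\sum_vw_{u,v}$, $W=\sum_{u,v}w_{u,v}$ (ordered pairs), $P_{u,v}=w_{u,v}/w_u$, $\pi_u=w_u/W$, $\pi(S)=\sum_{u\in S}\pi_u$, $(\pi|_S)_u=\pi_u/\pi(S)$ for $u\in S$. $\tau_M=\min\{i\ge0:Y_i\in M\}$, $\tau_S^+=\min\{i>0:Y_i\in S\}$. A unit flow from a distribution $\sigma$ supported on $X\setminus M$ to $M$ is $p:X\times X\to\mathbb R$ with $p_{u,v}=0$ if $w_{u,v}=0$, $p_{u,v}=-p_{v,u}$, $\sum_vp_{u,v}=\sigma_u$ for $u\notin M$, $\sum_{u\in M}\sum_{v\notin M}p_{u,v}=-1$. $R_{\sigma,M}=\min_p\sum_{\{u,v\}}p_{u,v}^2/w_{u,v}$, $R_{S,M}=\min_{\sigma:\mathrm{supp}(\sigma)\subseteq S}R_{\sigma,M}$, $C_{S,M}=WR_{S,M}$. *)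

(* Defs.v *)
From Stdlib Require Import Reals ClassicalEpsilon.
From HB Require Import structures.
From mathcomp Require Import all_boot.

Set Implicit Arguments.
Unset Strict Implicit.
Unset Printing Implicit Defensive.

Local Open Scope R_scope.

Section Graph.
Variable X : finType.
Variable w : X -> X -> R.

Definition wdeg (u : X) : R := \big[Rplus/0]_(v : X) w u v.
Definition Wtot : R := \big[Rplus/0]_(u : X) \big[Rplus/0]_(v : X) w u v.
Definition Pmat (u v : X) : R := w u v / wdeg u.
Definition pi (u : X) : R := wdeg u / Wtot.
Definition piSet (S : {set X}) : R := \big[Rplus/0]_(u in S) pi u.
Definition piRestr (S : {set X}) (u : X) : R :=
  if u \in S then pi u / piSet S else 0.

Definition connected_graph : Prop :=
  forall u v : X, exists s : seq X, last u s = v /\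
    forall i : nat, (i < size s)%N -> 0 < w (nth u (u :: s) i) (nth u s i).

Definition distr_on (S : {set X}) (sigma : X -> R) : Prop :=
  (forall u, 0 <= sigma u) /\ (forall u, u \notin S -> sigma u = 0) /\
  \big[Rplus/0]_(u : X) sigma u = 1.

Definition unit_flow (sigma : X -> R) (M : {set X}) (f : X -> X -> R) : Prop :=
  (forall u v, w u v = 0 -> f u v = 0) /\
  (forall u v, f u v = - f v u) /\
  (forall u, u \notin M -> \big[Rplus/0]_(v : X) f u v = sigma u) /\
  \big[Rplus/0]_(u in M) \big[Rplus/0]_(v in ~: M) f u v = -1.

(* energy sum_{unordered {u,v}} f_{u,v}^2 / w_{u,v}: half the sum over ordered
   pairs (diagonal terms vanish since f is antisymmetric), terms with
   w_{u,v} = 0 (where f_{u,v} = 0) contribute 0 *)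
Definition energy (f : X -> X -> R) : R :=
  / 2 * \big[Rplus/0]_(u : X) \big[Rplus/0]_(v : X)
          (if Rlt_dec 0 (w u v) then (f u v) ^ 2 / w u v else 0).

End Graph.

(* minimum of a set of reals (0 if the minimum does not exist) *)
Definition is_min (E : R -> Prop) (m : R) : Prop :=
  E m /\ forall x, E x -> m <= x.

Definition Rmin_of (E : R -> Prop) : R :=
  match excluded_middle_informative (exists m, is_min E m) with
  | left H => proj1_sig (constructive_indefinite_description _ H)
  | right _ => 0
  end.

Section Resistance.
Variable X : finType.
Variable w : X -> X -> R.

Definition R_sigma (sigma : X -> R) (M : {set X}) : R :=
  Rmin_of (fun r => exists f, unit_flow w sigma M f /\ r = energy w f).

Definition R_SM (S M : {set X}) : R :=
  Rmin_of (fun r => exists sigma, distr_on S sigma /\ r = R_sigma sigma M).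

Definition C_SM (S M : {set X}) : R := Wtot w * R_SM S M.

Definition traj (N : nat) := {ffun 'I_N.+1 -> X}.
Definition yat (N : nat) (y : traj N) (i : nat) : X := y (inord i).

Definition path_weight (S : {set X}) (N : nat) (y : traj N) : R :=
  piRestr w S (yat y 0) *
  \big[Rmult/1]_(i < N) Pmat w (yat y i) (yat y i.+1).

Definition Prob (S : {set X}) (N : nat) (ev : traj N -> bool) : R :=
  \big[Rplus/0]_(y : traj N) (if ev y then path_weight S y else 0).

End Resistance.

(* first index i with lo <= i <= N and y i \in A; N.+1 if there is none
   (i.e. the true hitting time exceeds N) *)
Definition first_hit (X : finType) (y : nat -> X) (A : {set X}) (lo N : nat) : nat :=
  (lo + find (fun k => y (lo + k) \in A) (iota 0 (N.+1 - lo)))%N.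

Definition tau (X : finType) (N : nat) (y : traj X N) (M : {set X}) : nat :=
  first_hit (yat y) M 0 N.
Definition tau_plus (X : finType) (N : nat) (y : traj X N) (S : {set X}) : nat :=
  first_hit (yat y) S 1 N.

(* Main.v *)
Require Import Defs.
From Stdlib Require Import Reals Lra FunctionalExtensionality ClassicalEpsilon.
From HB Require Import structures.
From mathcomp Require Import all_boot.

Set Implicit Arguments.
Unset Strict Implicit.
Unset Printing Implicit Defensive.
Local Open Scope R_scope.

Lemma Rplus_assoc' : associative Rplus.
Proof. move=> x y z; ring. Qed.
Lemma Rplus_comm' : commutative Rplus.
Proof. move=> x y; ring. Qed.
Lemma Rplus_0_l' : left_id 0 Rplus.
Proof. move=> x; ring. Qed.
HB.instance Definition _ := Monoid.isComLaw.Build R 0 Rplus Rplus_assoc' Rplus_comm' Rplus_0_l'.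
Lemma Rmult_assoc' : associative Rmult.
Proof. move=> x y z; ring. Qed.
Lemma Rmult_comm' : commutative Rmult.
Proof. move=> x y; ring. Qed.
Lemma Rmult_1_l' : left_id 1 Rmult.
Proof. move=> x; ring. Qed.
HB.instance Definition _ := Monoid.isComLaw.Build R 1 Rmult Rmult_assoc' Rmult_comm' Rmult_1_l'.
Lemma Rmult_0_l' : left_zero 0 Rmult.
Proof. move=> x; ring. Qed.
Lemma Rmult_0_r' : right_zero 0 Rmult.
Proof. move=> x; ring. Qed.
HB.instance Definition _ := Monoid.isMulLaw.Build R 0 Rmult Rmult_0_l' Rmult_0_r'.
Lemma Rdl : left_distributive Rmult Rplus.
Proof. move=> x y z; ring. Qed.
Lemma Rdr : right_distributive Rmult Rplus.
Proof. move=> x y z; ring. Qed.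
HB.instance Definition _ := Monoid.isAddLaw.Build R Rmult Rplus Rdl Rdr.

Lemma sumR_le (I : Type) (r : seq I) (P : pred I) (F G : I -> R) :
  (forall i, P i -> F i <= G i) ->
  \big[Rplus/0]_(i <- r | P i) F i <= \big[Rplus/0]_(i <- r | P i) G i.
Proof.
move=> H; apply: (big_ind2 (fun a b => a <= b)); [lra| move=> *; lra | exact H].
Qed.

Lemma sumR_opp (I : Type) (r : seq I) (P : pred I) (F : I -> R) :
  \big[Rplus/0]_(i <- r | P i) (- F i) = - \big[Rplus/0]_(i <- r | P i) F i.
Proof.
rewrite (big_morph Ropp (id1 := 0) (op1 := Rplus)) //.
  move=> x y; ring.
ring.
Qed.

Lemma sumR_sub (I : Type) (r : seq I) (P : pred I) (F G : I -> R) :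
  \big[Rplus/0]_(i <- r | P i) (F i - G i) =
  \big[Rplus/0]_(i <- r | P i) F i - \big[Rplus/0]_(i <- r | P i) G i.
Proof. by rewrite /Rminus big_split /= sumR_opp. Qed.

Lemma sumR_mull (I : Type) (r : seq I) (P : pred I) (F : I -> R) a :
  \big[Rplus/0]_(i <- r | P i) (a * F i) = a * \big[Rplus/0]_(i <- r | P i) F i.
Proof. by rewrite big_distrr. Qed.

Lemma sumR_ge0 (I : Type) (r : seq I) (P : pred I) (F : I -> R) :
  (forall i, P i -> 0 <= F i) -> 0 <= \big[Rplus/0]_(i <- r | P i) F i.
Proof.
move=> H; apply: (big_ind (fun a => 0 <= a)); [lra| move=> *; lra | exact H].
Qed.

Section Traj.
Variable X : finType.

Definition sy (n : nat) (y : traj X n) : seq X := map (yat y) (iota 0 n.+1).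

Definition consf (n : nat) (x : X) (y : traj X n) : traj X n.+1 :=
  [ffun i : 'I_n.+2 => if (i : nat) is k.+1 then yat y k else x].
Definition tailf (n : nat) (y : traj X n.+1) : traj X n :=
  [ffun j : 'I_n.+1 => yat y j.+1].

Lemma yat_consf0 n x (y : traj X n) : yat (consf x y) 0 = x.
Proof. by rewrite /yat /consf ffunE inordK. Qed.

Lemma yat_consfS n x (y : traj X n) k : (k < n.+1)%N -> yat (consf x y) k.+1 = yat y k.
Proof. by move=> Hk; rewrite /yat /consf ffunE inordK. Qed.

Lemma tail_consf n x (y : traj X n) : tailf (consf x y) = y.
Proof.
apply/ffunP => j; rewrite /tailf ffunE yat_consfS // /yat inord_val //.
Qed.

Lemma consf_tail n (y : traj X n.+1) : consf (yat y 0) (tailf y) = y.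
Proof.
apply/ffunP => i; rewrite /consf ffunE.
case: i => [[|k] Hk] /=.
  by rewrite /yat; congr (y _); apply: val_inj; rewrite /= inordK.
rewrite /tailf /yat ffunE inordK //; congr (y _); apply: val_inj; rewrite /= inordK //.

Qed.

Lemma sum_trajS n (F : traj X n.+1 -> R) :
  \big[Rplus/0]_(y : traj X n.+1) F y =
  \big[Rplus/0]_(x : X) \big[Rplus/0]_(y : traj X n) F (consf x y).
Proof.
rewrite pair_big /=.
rewrite (reindex (fun p : X * traj X n => consf p.1 p.2)) //=.
exists (fun y => (yat y 0, tailf y)) => [[x y] _ | y _] /=.
  by rewrite yat_consf0 tail_consf.
by rewrite consf_tail.
Qed.

Lemma sum_traj0 (F : traj X 0 -> R) :
  \big[Rplus/0]_(y : traj X 0) F y =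
  \big[Rplus/0]_(x : X) F [ffun _ => x].
Proof.
rewrite (reindex (fun x : X => [ffun _ : 'I_1 => x])) //=.
exists (fun y : traj X 0 => y ord0) => [x _ | y _] /=.
  by rewrite ffunE.
by apply/ffunP => i; rewrite ffunE (ord1 i).
Qed.

Lemma sy_consf n x (y : traj X n) : sy (consf x y) = x :: sy y.
Proof.
have E : iota 0 n.+2 = 0%N :: map (addn 1) (iota 0 n.+1) by rewrite -iotaDl.
rewrite /sy E map_cons -map_comp yat_consf0; congr (_ :: _).
apply/eq_in_map => k; rewrite mem_iota /= => Hk.
by rewrite add1n yat_consfS.
Qed.

End Traj.

Section Walk.
Variable X : finType.
Variable w : X -> X -> R.

Fixpoint walk (n : nat) (x : X) (G : seq X -> R) {struct n} : R :=
  match n with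
  | 0 => G [:: x]
  | n'.+1 => \big[Rplus/0]_(v : X) (Pmat w x v * walk n' v (fun s => G (x :: s)))
  end.

Definition prodP (n : nat) (y : traj X n) : R :=
  \big[Rmult/1]_(i < n) Pmat w (yat y i) (yat y i.+1).

Lemma prodP_consf n x (y : traj X n) :
  prodP (consf x y) = Pmat w x (yat y 0) * prodP y.
Proof.
rewrite /prodP big_ord_recl /= yat_consf0 yat_consfS //; congr (_ * _).
apply: eq_bigr => i _ /=.
rewrite /bump leq0n add1n.
have Hi := ltn_ord i.
rewrite yat_consfS; last by apply: (leq_trans Hi).
by rewrite yat_consfS // ltnS.
Qed.

Lemma path_sum n (H : X -> R) (G : seq X -> R) :
  \big[Rplus/0]_(y : traj X n) (H (yat y 0) * prodP y * G (sy y)) =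
  \big[Rplus/0]_(x : X) (H x * walk n x G).
Proof.
elim: n H G => [|n IH] H G.
  rewrite sum_traj0; apply: eq_bigr => x _.
  rewrite /prodP big_ord0 /sy /= /yat ffunE /=; ring.
rewrite sum_trajS; apply: eq_bigr => x _.
transitivity (H x * \big[Rplus/0]_(y : traj X n)
   (Pmat w x (yat y 0) * prodP y * (fun s => G (x :: s)) (sy y))).
  rewrite -sumR_mull; apply: eq_bigr => y _.
  rewrite yat_consf0 prodP_consf sy_consf /=; ring.
congr (_ * _); exact: (IH (Pmat w x) (fun s => G (x :: s))).

Qed.

Lemma walk_ext n x (G1 G2 : seq X -> R) :
  (forall s, size s = n.+1 -> G1 s = G2 s) -> walk n x G1 = walk n x G2.
Proof.
elim: n x G1 G2 => [|n IH] x G1 G2 H /=; first by apply: H.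
apply: eq_bigr => v _; congr (_ * _); apply: IH => s Hs; apply: H => /=; by rewrite Hs.
Qed.

Hypothesis Psum : forall x, \big[Rplus/0]_(v : X) Pmat w x v = 1.
Hypothesis Pnn : forall x v, 0 <= Pmat w x v.

Lemma walk_const n x c : walk n x (fun _ => c) = c.
Proof.
elim: n x => [|n IH] x //=.
under eq_bigr do rewrite IH.
by rewrite -big_distrl /= Psum Rmult_1_l.
Qed.

Lemma walk_sub n x (G1 G2 : seq X -> R) :
  walk n x (fun s => G1 s - G2 s) = walk n x G1 - walk n x G2.
Proof.
elim: n x G1 G2 => [|n IH] x G1 G2 //=.
rewrite -sumR_sub; apply: eq_bigr => v _.
rewrite (IH v (fun s => G1 (x :: s)) (fun s => G2 (x :: s))); ring.
Qed.

End Walk.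

Definition Ind (b : bool) : R := if b then 1 else 0.

Section Main.
Variable X : finType.
Variable w : X -> X -> R.
Variables M S : {set X}.
Hypothesis Hsym : forall u v, w u v = w v u.
Hypothesis Hnn : forall u v, 0 <= w u v.
Hypothesis Hdeg : forall u, 0 < wdeg w u.
Hypothesis HSM : forall u, u \in S -> u \notin M.

Definition Sp := fun z : X => z \in S.
Definition Mp := fun z : X => z \in M.

Lemma Pnn x v : 0 <= Pmat w x v.
Proof.
rewrite /Pmat /Rdiv; apply: Rmult_le_pos => //.
by apply: Rlt_le; apply: Rinv_0_lt_compat.
Qed.

Lemma Psum x : \big[Rplus/0]_(v : X) Pmat w x v = 1.
Proof.
rewrite /Pmat /Rdiv -big_distrl /= -/(wdeg w x).
by apply: Rinv_r; apply: Rgt_not_eq; apply: Hdeg.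
Qed.

Lemma w_P x v : w x v = wdeg w x * Pmat w x v.
Proof.
rewrite /Pmat /Rdiv; field; apply: Rgt_not_eq; apply: Hdeg.
Qed.

Fixpoint avoid (k : nat) (v : X) : R :=
  match k with
  | 0 => 1
  | k'.+1 => if v \in S then 0 else \big[Rplus/0]_(u : X) (Pmat w v u * avoid k' u)
  end.

Fixpoint cfun (k : nat) (v : X) : R :=
  match k with
  | 0 => 0
  | k'.+1 => if v \in M then 0 else if v \in S then 1
             else \big[Rplus/0]_(u : X) (Pmat w v u * cfun k' u)
  end.

Lemma walk_avoid k v :
  walk w k v (fun t => Ind (k <= find Sp t)%N) = avoid k v.
Proof.
elim: k v => [|k IH] v //=.
rewrite /Sp /=; case: (v \in S) => /=.
  under eq_bigr do rewrite (walk_const Psum).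
  by rewrite -big_distrl /= Psum; ring.
by apply: eq_bigr => u _; rewrite -IH.
Qed.

Lemma sumP_walk_const x k (G : seq X -> R) c : (forall t, G t = c) ->
  \big[Rplus/0]_(v : X) (Pmat w x v * walk w k v G) = c.
Proof.
move=> H; rewrite (_ : G = fun _ => c); last by apply: functional_extensionality.
under eq_bigr do rewrite (walk_const Psum).
by rewrite -big_distrl /= Psum; ring.
Qed.

Lemma walk_c k v :
  walk w k v (fun t => Ind ((find Sp t < k) && (find Sp t < find Mp t))%N) = cfun k v.
Proof.
elim: k v => [|k IH] v //=.
rewrite /Sp /Mp /=; case: (v \in M) => /=.
  by apply: sumP_walk_const => t; case: (v \in S); rewrite ?ltn0 ?andbF.
case: (v \in S) => /=.
  by apply: sumP_walk_const => t.
by apply: eq_bigr => u _; rewrite -IH.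
Qed.

Definition evI (T : nat) (s : seq X) : R :=
  Ind ((find Mp s < 1 + find Sp (behead s)) && (1 + find Sp (behead s) < T))%N.

Lemma walk_ev n x : x \in S ->
  walk w n.+1 x (evI n.+1) =
  1 - \big[Rplus/0]_(v : X) (Pmat w x v * avoid n v)
    - \big[Rplus/0]_(v : X) (Pmat w x v * cfun n v).
Proof.
move=> xS /=.
have xM : (x \in M) = false by apply/negbTE/HSM.
transitivity (\big[Rplus/0]_(v : X) (Pmat w x v * (1 - avoid n v - cfun n v))).
  apply: eq_bigr => v _; congr (_ * _).
  rewrite -walk_avoid -walk_c -(walk_const Psum n v 1).
  rewrite -walk_sub -walk_sub.
  apply: walk_ext => t Ht.
  rewrite /evI /= /Mp xM /= add1n !ltnS.
  set fs := find Sp t; set fm := find Mp t.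
  case: (leqP n fs) => h.
    rewrite andbF /Ind /=; ring.
  rewrite andbT /Ind /=.
  case: (ltngtP fm fs) => h2 /=; try ring.
  exfalso.
  have hs : has Sp t by rewrite has_find Ht; apply: (leq_trans h).
  have hm : has Mp t by rewrite has_find -/fm h2 Ht; apply: (leq_trans h).
  have := nth_find x hs; have := nth_find x hm; rewrite -/fs -/fm h2 /Mp /Sp => Hm Hs.
  by move: (HSM Hs); rewrite Hm.
rewrite (eq_bigr (fun v => (Pmat w x v - Pmat w x v * avoid n v) - Pmat w x v * cfun n v)); last by move=> v _; ring.
by rewrite !sumR_sub Psum.
Qed.



Lemma Prob_walk T :
  Prob w S (fun y : traj X T => (tau y M < tau_plus y S) && (tau_plus y S < T))%N
  = \big[Rplus/0]_(x : X) (piRestr w S x * walk w T x (evI T)).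
Proof.
rewrite /Prob -path_sum; apply: eq_bigr => y _.
have E1 : tau y M = find Mp (sy y).
  rewrite /tau /first_hit /sy find_map subn0 add0n.
  by apply: eq_find => k.
have E2 : tau_plus y S = (1 + find Sp (behead (sy y)))%N.
  rewrite /tau_plus /first_hit /sy /=.
  have -> : iota 1 T = map (addn 1) (iota 0 T) by rewrite -iotaDl.
  rewrite -map_comp find_map subSS subn0.
  by congr (_ + _)%N; apply: eq_find => k.
rewrite /evI -E1 -E2 /Ind /path_weight /prodP; case: ifP => _; ring.
Qed.



Lemma avoid_bounds k v : 0 <= avoid k v <= 1.
Proof.
elim: k v => [|k IH] v /=; first lra.
case: (v \in S); first lra.
split.
  apply: sumR_ge0 => u _; apply: Rmult_le_pos; [apply: Pnn | apply: (proj1 (IH u))].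
rewrite -(Psum v); apply: sumR_le => u _.
have := Pnn v u; have := IH u; nra.
Qed.

Lemma avoid_mono k v : avoid k.+1 v <= avoid k v.
Proof.
elim: k v => [|k IH] v; first by have := avoid_bounds 1 v; rewrite [avoid 0 v]/=; lra.
rewrite [avoid k.+2 v]/= [avoid k.+1 v]/=.
case: (v \in S); first lra.
apply: sumR_le => u _; apply: Rmult_le_compat_l; [apply: Pnn | apply: IH].
Qed.

Definition bb k := \big[Rplus/0]_(x in S) \big[Rplus/0]_(v : X) (w x v * avoid k v).
Definition AA k := \big[Rplus/0]_(x : X) (wdeg w x * avoid k x).

Lemma AA_step k : AA k = bb k + AA k.+1.
Proof.
pose F x := \big[Rplus/0]_(v : X) (w x v * avoid k v).
have E1 : AA k = \big[Rplus/0]_(x : X) F x.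
  rewrite /AA /F.
  under eq_bigr do rewrite /wdeg big_distrl /=.
  rewrite exchange_big /=; apply: eq_bigr => x _; apply: eq_bigr => v _.
  by rewrite Hsym.
rewrite E1 (bigID (fun x => x \in S)) /=; congr (_ + _).
rewrite big_mkcond /AA; apply: eq_bigr => x _ /=.
case: (x \in S) => /=; first ring.
rewrite /F -sumR_mull; apply: eq_bigr => v _; rewrite w_P; ring.
Qed.

Lemma bb_tele m : \big[Rplus/0]_(k < m) bb k = AA 0 - AA m.
Proof.
elim: m => [|m IH]; first by rewrite big_ord0; ring.
by rewrite big_ord_recr /= IH (AA_step m); ring.
Qed.

Lemma bb_mono k : bb k.+1 <= bb k.
Proof.
apply: sumR_le => x _; apply: sumR_le => v _.
apply: Rmult_le_compat_l; [apply: Hnn | apply: avoid_mono].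
Qed.

Lemma bb_sum m : INR m.+1 * bb m <= \big[Rplus/0]_(k < m.+1) bb k.
Proof.
elim: m => [|m IH].
  by rewrite big_ord_recr big_ord0 /=; lra.
rewrite big_ord_recr (S_INR m.+1).
have := bb_mono m.
have := bb_mono m.
move: IH; set s := \big[Rplus/0]_(i < m.+1) bb i; simpl nat_of_ord.
move=> H1 H2 _; have H0 := pos_INR m.+1.
apply: (Rle_trans _ (s + bb m.+1)); [nra | apply: Rle_refl].
Qed.

Lemma AA_ge0 m : 0 <= AA m.
Proof.
apply: sumR_ge0 => x _; apply: Rmult_le_pos; [apply: Rlt_le; apply: Hdeg | apply: (proj1 (avoid_bounds _ _))].
Qed.

Lemma AA0 : AA 0 = Wtot w.
Proof. by rewrite /AA /Wtot; apply: eq_bigr => x _ /=; rewrite Rmult_1_r. Qed.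

Lemma kac n : INR n.+1 * bb n <= Wtot w.
Proof.
have := bb_sum n; rewrite bb_tele AA0; have := AA_ge0 n.+1; lra.
Qed.

Lemma cfun_bounds k v : 0 <= cfun k v <= 1.
Proof.
elim: k v => [|k IH] v /=; first lra.
case: (v \in M); first lra.
case: (v \in S); first lra.
split.
  apply: sumR_ge0 => u _; apply: Rmult_le_pos; [apply: Pnn | apply: (proj1 (IH u))].
rewrite -(Psum v); apply: sumR_le => u _.
have := Pnn v u; have := IH u; nra.
Qed.

Lemma cfun_mono k v : cfun k v <= cfun k.+1 v.
Proof.
elim: k v => [|k IH] v; first by have := cfun_bounds 1 v; rewrite [cfun 0 v]/=; lra.
rewrite [cfun k.+2 v]/= [cfun k.+1 v]/=.
case: (v \in M); first lra.
case: (v \in S); first lra.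
apply: sumR_le => u _; apply: Rmult_le_compat_l; [apply: Pnn | apply: IH].
Qed.

Definition dS := \big[Rplus/0]_(x in S) wdeg w x.

Lemma energy_bound (sigma : X -> R) (f : X -> X -> R) m :
  distr_on S sigma -> unit_flow w sigma M f -> 0 < energy w f ->
  \big[Rplus/0]_(x in S) \big[Rplus/0]_(v : X) (w x v * cfun m.+1 v)
    <= dS - / energy w f.
Proof.
move=> [s0 [s1 s2]] [f0 [f1 [f2 _]]] Epos.
set E := energy w f.
have EposE : 0 < E := Epos.
set q := cfun m.+1.
have qM u : u \in M -> q u = 0 by move=> uM; rewrite /q /= uM.
have qS u : u \in S -> q u = 1.
  by move=> uS; rewrite /q /= (negbTE (HSM uS)) uS.
have qI u : u \notin M -> u \notin S ->
    q u <= \big[Rplus/0]_(v : X) (Pmat w u v * q v).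
  move=> uM uS; rewrite /q /= (negbTE uM) (negbTE uS).
  apply: sumR_le => v _; apply: Rmult_le_compat_l; [apply: Pnn | apply: cfun_mono].
have q0 u : 0 <= q u by apply: (proj1 (cfun_bounds _ _)).
have divq u : \big[Rplus/0]_(v : X) (f u v * q u) = sigma u.
  rewrite -big_distrl /=.
  case uM: (u \in M).
    have uS : u \notin S by apply/negP => uS; move: (HSM uS); rewrite uM.
    by rewrite qM // s1 //; ring.
  rewrite f2 ?uM //.
  case uS: (u \in S); first by rewrite qS //; ring.
  by rewrite s1 ?uS //; ring.
have step1 : \big[Rplus/0]_(u : X) \big[Rplus/0]_(v : X) (f u v * (q u - q v)) = 2.
  transitivity (\big[Rplus/0]_(u : X) \big[Rplus/0]_(v : X) (f u v * q u)
     - \big[Rplus/0]_(u : X) \big[Rplus/0]_(v : X) (f u v * q v)).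
    rewrite -sumR_sub; apply: eq_bigr => u _; rewrite -sumR_sub.
    by apply: eq_bigr => v _; ring.
  rewrite [X in _ - X]exchange_big /=.
  have -> : \big[Rplus/0]_(v : X) \big[Rplus/0]_(u : X) (f u v * q v) =
            - \big[Rplus/0]_(v : X) \big[Rplus/0]_(u : X) (f v u * q v).
    rewrite -sumR_opp; apply: eq_bigr => v _; rewrite -sumR_opp.
    by apply: eq_bigr => u _; rewrite f1; ring.
  under eq_bigr do rewrite divq.
  rewrite s2; ring.
set D := \big[Rplus/0]_(u : X) \big[Rplus/0]_(v : X) (w u v * (q u - q v) ^ 2).
have step2 : \big[Rplus/0]_(u : X) \big[Rplus/0]_(v : X) (f u v * (q u - q v)) <= 1 + E / 2 * D.
  have HE : \big[Rplus/0]_(u : X) \big[Rplus/0]_(v : X)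
       (if Rlt_dec 0 (w u v) then f u v ^ 2 / w u v else 0) = 2 * E.
    by rewrite /E /energy; field.
  have -> : 1 + E / 2 * D =
    \big[Rplus/0]_(u : X) \big[Rplus/0]_(v : X)
      ((if Rlt_dec 0 (w u v) then f u v ^ 2 / w u v else 0) / (2 * E)
       + E / 2 * (w u v * (q u - q v) ^ 2)).
    symmetry.
    rewrite (eq_bigr (fun u => \big[Rplus/0]_(v : X)
          (if Rlt_dec 0 (w u v) then f u v ^ 2 / w u v else 0) / (2 * E)
          + E / 2 * \big[Rplus/0]_(v : X) (w u v * (q u - q v) ^ 2))); last first.
      by move=> u _; rewrite big_split /= /Rdiv -big_distrl sumR_mull.
    rewrite big_split /= /Rdiv -big_distrl /= -/(Rdiv _ _) HE sumR_mull -/D.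
    rewrite /Rdiv Rinv_r; [ring | lra].
  apply: sumR_le => u _; apply: sumR_le => v _.
  case: (Rlt_dec 0 (w u v)) => hw /=.
    set d := q u - q v.
    have Hk : f u v ^ 2 / w u v / (2 * E) + E / 2 * (w u v * d ^ 2) - f u v * d
        = (f u v - E * w u v * d) ^ 2 / (2 * E * w u v).
      field; lra.
    have : 0 <= (f u v - E * w u v * d) ^ 2 / (2 * E * w u v).
      apply: Rmult_le_pos; first by apply: pow2_ge_0.
      apply: Rlt_le; apply: Rinv_0_lt_compat; nra.
    lra.
  have w0 : w u v = 0 by have := Hnn u v; lra.
  rewrite f0 // w0; lra.
set Z := \big[Rplus/0]_(x in S) \big[Rplus/0]_(v : X) (w x v * q v).
have D2 : D = 2 * \big[Rplus/0]_(u : X) \big[Rplus/0]_(v : X) (w u v * (q u - q v) * q u).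
  transitivity (\big[Rplus/0]_(u : X) \big[Rplus/0]_(v : X) (w u v * (q u - q v) * q u)
    - \big[Rplus/0]_(u : X) \big[Rplus/0]_(v : X) (w u v * (q u - q v) * q v)).
    rewrite /D -sumR_sub; apply: eq_bigr => u _; rewrite -sumR_sub.
    by apply: eq_bigr => v _; ring.
  have -> : \big[Rplus/0]_(u : X) \big[Rplus/0]_(v : X) (w u v * (q u - q v) * q v)
     = - \big[Rplus/0]_(u : X) \big[Rplus/0]_(v : X) (w u v * (q u - q v) * q u).
    rewrite exchange_big /= -sumR_opp; apply: eq_bigr => u _; rewrite -sumR_opp.
    by apply: eq_bigr => v _; rewrite Hsym; ring.
  ring.
have Hu u : \big[Rplus/0]_(v : X) (w u v * (q u - q v) * q u) <=
    (if u \in S then wdeg w u - \big[Rplus/0]_(v : X) (w u v * q v) else 0).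
  case uS: (u \in S).
    rewrite qS // /wdeg -sumR_sub; apply: Req_le; apply: eq_bigr => v _; ring.
  case uM: (u \in M).
    rewrite qM //; apply: Req_le; rewrite big1 // => v _; ring.
  rewrite (eq_bigr (fun v => q u * (q u * w u v) - q u * (w u v * q v))); last by move=> v _; ring.
  rewrite sumR_sub !sumR_mull -/(wdeg w u).
  rewrite (eq_bigr (fun v => wdeg w u * (Pmat w u v * q v))); last by move=> v _; rewrite w_P; ring.
  rewrite sumR_mull.
  have := qI u (negbT uM) (negbT uS); have := q0 u; have := Hdeg u.
  set P := \big[Rplus/0]_(v : X) (Pmat w u v * q v).
  move=> h1 h2 h3.
  have : 0 <= q u * wdeg w u by apply: Rmult_le_pos; lra.
  nra.
have step3 : D <= 2 * (dS - Z).
  rewrite D2; apply: Rmult_le_compat_l; first lra.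
  apply: (Rle_trans _ (\big[Rplus/0]_(u : X)
     (if u \in S then wdeg w u - \big[Rplus/0]_(v : X) (w u v * q v) else 0))).
    by apply: sumR_le => u _; apply: Hu.
  rewrite -big_mkcond /= /dS /Z -sumR_sub; apply: Req_le; by [].
have H1 : 1 <= E * (dS - Z) by nra.
have HEi : 0 < / E by apply: Rinv_0_lt_compat.
have : / E * 1 <= / E * (E * (dS - Z)) by apply: Rmult_le_compat_l; lra.
rewrite -Rmult_assoc Rinv_l; lra.
Qed.

Lemma piSet_eq : piSet w S = dS / Wtot w.
Proof. by rewrite /piSet /pi /dS /Rdiv big_distrl. Qed.

Lemma main_core n p (sigma : X -> R) (f : X -> X -> R) :
  0 < Wtot w -> 0 < dS ->
  distr_on S sigma -> unit_flow w sigma M f -> 0 < energy w f ->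
  2 / INR n.+1 <= piSet w S * p -> piSet w S * p <= / (Wtot w * energy w f) ->
  p / 2 <= Prob w S (fun y : traj X n.+1 =>
      ((tau y M < tau_plus y S) && (tau_plus y S < n.+1))%N).
Proof.
move=> Wpos dSpos Hs Hf Epos h1 h2.
have Wpos0 : 0 < Wtot w := Wpos.
set W := Wtot w in Wpos h2 *.
set E := energy w f in Epos h2 *.
pose cc k := \big[Rplus/0]_(x in S) \big[Rplus/0]_(v : X) (w x v * cfun k v).
rewrite Prob_walk.
have HP : \big[Rplus/0]_(x : X) (piRestr w S x * walk w n.+1 x (evI n.+1))
    = (dS - bb n - cc n) * / dS.
  transitivity (\big[Rplus/0]_(x in S)
     ((wdeg w x - \big[Rplus/0]_(v : X) (w x v * avoid n v)
                - \big[Rplus/0]_(v : X) (w x v * cfun n v)) * / dS)).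
    rewrite [RHS]big_mkcond; apply: eq_bigr => x _.
    rewrite /piRestr; case xS: (x \in S); last by ring.
    rewrite walk_ev // piSet_eq /Defs.pi.
    have Ea : \big[Rplus/0]_(v : X) (w x v * avoid n v) =
        wdeg w x * \big[Rplus/0]_(v : X) (Pmat w x v * avoid n v).
      by rewrite -sumR_mull; apply: eq_bigr => v _; rewrite w_P; ring.
    have Ec : \big[Rplus/0]_(v : X) (w x v * cfun n v) =
        wdeg w x * \big[Rplus/0]_(v : X) (Pmat w x v * cfun n v).
      by rewrite -sumR_mull; apply: eq_bigr => v _; rewrite w_P; ring.
    rewrite Ea Ec.
    field; split; lra.
  by rewrite -big_distrl /= !sumR_sub.
rewrite HP.
have hk := kac n.
have hc1 : cc n <= cc n.+1.
  apply: sumR_le => x _; apply: sumR_le => v _.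
  apply: Rmult_le_compat_l; [apply: Hnn | apply: cfun_mono].
have hc2 : cc n.+1 <= dS - / E by apply: (energy_bound n Hs Hf Epos).
set t := INR n.+1 in h1 hk.
have tpos : 0 < t by apply: lt_0_INR; apply/ltP.
rewrite -/W in hk.
rewrite piSet_eq in h1 h2.
set B := bb n in hk *.
set iE := / E in hc2.
have Ei : E * iE = 1 by apply: Rinv_r; lra.
have Wi : W * / W = 1 by apply: Rinv_r; lra.
have ti : t * / t = 1 by apply: Rinv_r; lra.
have dSi : dS * / dS = 1 by apply: Rinv_r; lra.
have Wip : 0 < / W by apply: Rinv_0_lt_compat.
have tip : 0 < / t by apply: Rinv_0_lt_compat.
have dSip : 0 < / dS by apply: Rinv_0_lt_compat.
have hB : B <= W * / t.
  have := Rmult_le_compat_l (/ t) _ _ (Rlt_le _ _ tip) hk.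
  have -> : / t * (t * B) = B by rewrite -Rmult_assoc Rinv_l; lra.
  lra.
have hh1 : 2 * (W * / t) <= dS * p.
  have := Rmult_le_compat_l W _ _ (Rlt_le _ _ Wpos) h1.
  have -> : W * (dS / W * p) = dS * p by field; lra.
  rewrite /Rdiv; lra.
have hh2 : dS * p <= iE.
  have := Rmult_le_compat_l W _ _ (Rlt_le _ _ Wpos) h2.
  have -> : W * (dS / W * p) = dS * p by field; lra.
  rewrite Rinv_mult -Rmult_assoc Wi Rmult_1_l -/iE; lra.
have key : dS * p / 2 <= dS - B - cc n by lra.
have := Rmult_le_compat_l (/ dS) _ _ (Rlt_le _ _ dSip) key.
have -> : / dS * (dS * p / 2) = p / 2 by field; lra.
lra.
Qed.

End Main.

Lemma Rmin_of_spec (E : R -> Prop) : Rmin_of E <> 0 -> E (Rmin_of E).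
Proof.
rewrite /Rmin_of; case: excluded_middle_informative => [H|H] //.
case: (constructive_indefinite_description _ H) => m [Hm _] _ /=; exact: Hm.
Qed.

Theorem mainTheorem4 (X : finType) (w : X -> X -> R) (M S : {set X})
    (p : R) (T : nat) :
  (forall u v, w u v = w v u) ->
  (forall u v, 0 <= w u v) ->
  connected_graph w ->
  M != set0 ->
  S != set0 ->
  S \subset ~: M ->
  (0 < T)%N ->
  2 / INR T <= piSet w S * p <= / C_SM w S M ->
  p / 2 <=
    Prob w S (fun y : traj X T =>
      ((tau y M < tau_plus y S)%N && (tau_plus y S < T)%N)).
Proof.
move=> Hsym Hnn Hcon /set0Pn [m mM] /set0Pn [s sS] HSMs HT [h1 h2].
have HSM : forall u, u \in S -> u \notin M.
  by move=> u uS; have := subsetP HSMs u uS; rewrite in_setC.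
have Hdeg : forall u, 0 < wdeg w u.
  move=> u.
  have [v Hv] : exists v, v <> u.
    case: (eqVneq u s) => [-> | hus].
      exists m => hms; move: (HSM s sS); rewrite -hms mM //.
    by exists s => hsu; rewrite hsu eqxx in hus.
  have [l [Hl Hpos]] := Hcon u v.
  case: l Hl Hpos => [/= Hl|a l _ Hpos]; first by exfalso; apply: Hv; rewrite Hl.
  have h0 := Hpos 0%N (ltn0Sn _); rewrite /= in h0.
  rewrite /wdeg (bigD1 a) //=.
  have : 0 <= \big[Rplus/0]_(i | i != a) w u i by apply: sumR_ge0.
  move=> h; apply: (Rlt_le_trans _ (w u a)) => //.
  apply: (Rle_trans _ (w u a + \big[Rplus/0]_(i | i != a) w u i)); [lra | apply: Rle_refl].
have Wpos : 0 < Wtot w.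
  rewrite /Wtot (bigD1 s) //=.
  have := Hdeg s; rewrite /wdeg => hs.
  have : 0 <= \big[Rplus/0]_(i | i != s) \big[Rplus/0]_(v : X) w i v.
    apply: sumR_ge0 => i _; apply: sumR_ge0 => v _; exact: Hnn.
  move=> h.
  apply: (Rlt_le_trans _ (\big[Rplus/0]_(v : X) w s v + \big[Rplus/0]_(i | i != s) \big[Rplus/0]_(v : X) w i v)); [lra | apply: Rle_refl].
have dSpos : 0 < dS w S.
  rewrite /dS (bigD1 s) //=.
  have := Hdeg s => hs.
  have : 0 <= \big[Rplus/0]_(i | (i \in S) && (i != s)) wdeg w i.
    apply: sumR_ge0 => i _; apply: Rlt_le; exact: Hdeg.
  move=> h.
  apply: (Rlt_le_trans _ (wdeg w s + \big[Rplus/0]_(i | (i \in S) && (i != s)) wdeg w i)); [lra | apply: Rle_refl].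
have tpos : 0 < 2 / INR T.
  apply: Rdiv_lt_0_compat; first lra.
  by apply: lt_0_INR; apply/ltP.
have Cpos : 0 < C_SM w S M.
  case: (Rtotal_order 0 (C_SM w S M)) => [//|[h|h]].
    by rewrite -h Rinv_0 in h2; lra.
  have := Rinv_lt_0_compat _ h; lra.
have Rpos : 0 < R_SM w S M.
  move: Cpos; rewrite /C_SM => Cpos.
  case: (Rle_or_lt (R_SM w S M) 0) => // h.
  have : Wtot w * R_SM w S M <= 0.
    rewrite -(Rmult_0_r (Wtot w)); apply: Rmult_le_compat_l; lra.
  lra.
have HR : R_SM w S M <> 0 by lra.
have [sigma [Hsig Heq]] :=
  @Rmin_of_spec (fun r => exists sigma, distr_on S sigma /\ r = R_sigma w sigma M) HR.
change (Rmin_of _) with (R_SM w S M) in Heq.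
have HR2 : R_sigma w sigma M <> 0 by lra.
have [f [Hf Heq2]] :=
  @Rmin_of_spec (fun r => exists f, unit_flow w sigma M f /\ r = energy w f) HR2.
change (Rmin_of _) with (R_sigma w sigma M) in Heq2.
have Epos : 0 < energy w f by lra.
have hC : C_SM w S M = Wtot w * energy w f by rewrite /C_SM Heq Heq2.
rewrite hC in h2.
clear tpos.
case: T HT h1 h2 => [//|n] _ h1 h2.
exact: (main_core Hsym Hnn Hdeg HSM Wpos dSpos Hsig Hf Epos h1 h2).
Qed.
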